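(* For every $\varepsilon>0$ there exists a setting with two items and two unit-demand agents whose valuations satisfy single-crossing, such that every (randomized) ex-post IC mechanism has, at some signal profile, expected welfare at most $\big(\frac{2+\sqrt2}{4}+\varepsilon\big)$ times the optimal welfare.
   Context: Two agents, items $a,b$; each agent has a scalar signal in $\{0,1\}$; values $v_{ij}(\mathbf{s})\ge0$ for item $j$ are public functions of the profile; unit demand means the value for a bundle $T$ is $\max_{j\in T}v_{ij}(\mathbf{s})$. Single-crossing: for every agent $i$, $\mathbf{s}_{-i}$, item $j$, agent $\ell$, and $s_i<s_i'$, $v_{ij}(s_i',\mathbf{s}_{-i})-v_{ij}(s_i,\mathbf{s}_{-i})\ge v_{\ell j}(s_i',\mathbf{s}_{-i})-v_{\ell j}(s_i,\mathbf{s}_{-i})$. A randomized mechanism assigns probabilities $x_{iT}(\mathbf{s})$ to feasible allocations and expected payments; ex-post IC means truthful reporting maximizes expected utility (expected true value minus expected payment) at every true profile when others report truthfully. *)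

(* Defs.v *)
From Stdlib Require Import Reals List.
Import ListNotations.
Open Scope R_scope.

Inductive agent := Ag1 | Ag2.
Inductive item := ItA | ItB.

Definition agent_eqb (i j : agent) : bool :=
  match i, j with Ag1, Ag1 | Ag2, Ag2 => true | _, _ => false end.

(** A signal profile: each agent's signal in {0,1} (false = 0, true = 1). *)
Definition profile := agent -> bool.

Definition upd (s : profile) (i : agent) (b : bool) : profile :=
  fun j => if agent_eqb j i then b else s j.

Definition valuation := agent -> item -> profile -> R.

(** A bundle T ⊆ {a,b}: (a ∈ T, b ∈ T). *)
Definition bundle := (bool * bool)%type.
Definition all_bundles : list bundle :=
  [(false,false); (true,false); (false,true); (true,true)].

Definition alloc := (bundle * bundle)%type.
Definition all_allocs : list alloc := list_prod all_bundles all_bundles.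

Definition feasible (A : alloc) : bool :=
  negb (fst (fst A) && fst (snd A)) && negb (snd (fst A) && snd (snd A)).

Definition bundle_of (i : agent) (A : alloc) : bundle :=
  match i with Ag1 => fst A | Ag2 => snd A end.

(** Unit demand: value of T is max_{j in T} v_{ij}(s) (0 for the empty bundle;
    values are nonnegative). *)
Definition bval (v : valuation) (i : agent) (T : bundle) (s : profile) : R :=
  Rmax (if fst T then v i ItA s else 0) (if snd T then v i ItB s else 0).

Definition lsum {X} (f : X -> R) (l : list X) : R :=
  fold_right (fun a acc => f a + acc) 0 l.

Definition nonneg_vals (v : valuation) : Prop :=
  forall i j s, 0 <= v i j s.

(** Single crossing (signals binary, so s_i < s_i' means false < true). *)
Definition single_crossing (v : valuation) : Prop :=
  forall (i : agent) (s : profile) (j : item) (l : agent),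
    v i j (upd s i true) - v i j (upd s i false)
    >= v l j (upd s i true) - v l j (upd s i false).

(** A randomized mechanism: x r A = probability of allocation A at reported
    profile r; p i r = expected payment of agent i at reported profile r. *)
Definition alloc_rule := profile -> alloc -> R.
Definition pay_rule := agent -> profile -> R.

Definition valid_alloc_rule (x : alloc_rule) : Prop :=
  (forall r A, 0 <= x r A) /\
  (forall r A, feasible A = false -> x r A = 0) /\
  (forall r, lsum (x r) all_allocs = 1).

Definition exp_util (v : valuation) (x : alloc_rule) (p : pay_rule)
  (i : agent) (s r : profile) : R :=
  lsum (fun A => x r A * bval v i (bundle_of i A) s) all_allocs - p i r.

Definition expost_IC (v : valuation) (x : alloc_rule) (p : pay_rule) : Prop :=
  forall (i : agent) (s : profile) (b : bool),
    exp_util v x p i s s >= exp_util v x p i s (upd s i b).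

Definition welfare (v : valuation) (A : alloc) (s : profile) : R :=
  bval v Ag1 (bundle_of Ag1 A) s + bval v Ag2 (bundle_of Ag2 A) s.

Definition exp_welfare (v : valuation) (x : alloc_rule) (s : profile) : R :=
  lsum (fun A => x s A * welfare v A s) all_allocs.

(** Optimal welfare: max over feasible allocations (the empty allocation is
    feasible with welfare 0, so starting the fold at 0 is harmless). *)
Definition opt_welfare (v : valuation) (s : profile) : R :=
  fold_right (fun A m => Rmax (welfare v A s) m) 0
    (filter feasible all_allocs).

(* Main.v *)
Require Import Defs.
From Stdlib Require Import Reals Lra Psatz FunctionalExtensionality.
Open Scope R_scope.

Definition vex : valuation := fun i j s =>
  match i, j with
  | Ag1, ItA => 5
  | Ag1, ItB => if s Ag1 then 4 else 3
  | Ag2, ItA => if s Ag1 then 0 else 5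
  | Ag2, ItB => if s Ag1 then 1 else 0
  end.

Ltac kill_rmax :=
  repeat match goal with
  | |- context [Rmax ?a ?b] =>
      first [rewrite (Rmax_left a b) by lra | rewrite (Rmax_right a b) by lra]
  | H : context [Rmax ?a ?b] |- _ =>
      first [rewrite (Rmax_left a b) in H by lra | rewrite (Rmax_right a b) in H by lra]
  end.

Theorem mainTheorem13 :
  forall eps : R, 0 < eps ->
  exists v : valuation,
    nonneg_vals v /\ single_crossing v /\
    forall (x : alloc_rule) (p : pay_rule),
      valid_alloc_rule x -> expost_IC v x p ->
      exists s : profile,
        0 < opt_welfare v s /\
        exp_welfare v x s <= ((2 + sqrt 2) / 4 + eps) * opt_welfare v s.
Proof.
  intros eps Heps.
  assert (Hs2 : 14/17 <= (2 + sqrt 2) / 4 + eps).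
  { pose proof (sqrt_sqrt 2 ltac:(lra)). pose proof (sqrt_pos 2). nra. }
  exists vex. split; [|split].
  - intros i j s; destruct i, j; simpl; try destruct (s Ag1); lra.
  - intros i s j l; unfold vex, upd; destruct i, j, l; simpl; try destruct (s Ag1); lra.
  - intros x p [Hnn [Hfeas Hsum]] HIC.
    pose (sL := fun _ : agent => false).
    pose proof (HIC Ag1 sL true) as IC1.
    pose proof (HIC Ag1 (upd sL Ag1 true) false) as IC2.
    assert (E : upd (upd sL Ag1 true) Ag1 false = sL).
    { apply functional_extensionality; intros []; reflexivity. }
    rewrite E in IC2.
    assert (hH : upd sL Ag1 true Ag1 = true) by reflexivity.
    assert (hL : sL Ag1 = false) by reflexivity.
    set (sH := upd sL Ag1 true) in *.
    clearbody sH sL.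
    pose proof (Hsum sL) as HsL. pose proof (Hsum sH) as HsH.
    unfold exp_util, lsum, all_allocs, all_bundles, bval, bundle_of, vex in *.
    pose proof (Hnn sL (@pair bundle bundle (false,false) (false,false))).
    pose proof (Hnn sL (@pair bundle bundle (false,false) (true,false))).
    pose proof (Hnn sL (@pair bundle bundle (false,false) (false,true))).
    pose proof (Hnn sL (@pair bundle bundle (false,false) (true,true))).
    pose proof (Hnn sL (@pair bundle bundle (true,false) (false,false))).
    pose proof (Hnn sL (@pair bundle bundle (true,false) (true,false))).
    pose proof (Hfeas sL (@pair bundle bundle (true,false) (true,false)) eq_refl).
    pose proof (Hnn sL (@pair bundle bundle (true,false) (false,true))).
    pose proof (Hnn sL (@pair bundle bundle (true,false) (true,true))).
    pose proof (Hfeas sL (@pair bundle bundle (true,false) (true,true)) eq_refl).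
    pose proof (Hnn sL (@pair bundle bundle (false,true) (false,false))).
    pose proof (Hnn sL (@pair bundle bundle (false,true) (true,false))).
    pose proof (Hnn sL (@pair bundle bundle (false,true) (false,true))).
    pose proof (Hfeas sL (@pair bundle bundle (false,true) (false,true)) eq_refl).
    pose proof (Hnn sL (@pair bundle bundle (false,true) (true,true))).
    pose proof (Hfeas sL (@pair bundle bundle (false,true) (true,true)) eq_refl).
    pose proof (Hnn sL (@pair bundle bundle (true,true) (false,false))).
    pose proof (Hnn sL (@pair bundle bundle (true,true) (true,false))).
    pose proof (Hfeas sL (@pair bundle bundle (true,true) (true,false)) eq_refl).
    pose proof (Hnn sL (@pair bundle bundle (true,true) (false,true))).
    pose proof (Hfeas sL (@pair bundle bundle (true,true) (false,true)) eq_refl).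
    pose proof (Hnn sL (@pair bundle bundle (true,true) (true,true))).
    pose proof (Hfeas sL (@pair bundle bundle (true,true) (true,true)) eq_refl).
    pose proof (Hnn sH (@pair bundle bundle (false,false) (false,false))).
    pose proof (Hnn sH (@pair bundle bundle (false,false) (true,false))).
    pose proof (Hnn sH (@pair bundle bundle (false,false) (false,true))).
    pose proof (Hnn sH (@pair bundle bundle (false,false) (true,true))).
    pose proof (Hnn sH (@pair bundle bundle (true,false) (false,false))).
    pose proof (Hnn sH (@pair bundle bundle (true,false) (true,false))).
    pose proof (Hfeas sH (@pair bundle bundle (true,false) (true,false)) eq_refl).
    pose proof (Hnn sH (@pair bundle bundle (true,false) (false,true))).
    pose proof (Hnn sH (@pair bundle bundle (true,false) (true,true))).
    pose proof (Hfeas sH (@pair bundle bundle (true,false) (true,true)) eq_refl).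
    pose proof (Hnn sH (@pair bundle bundle (false,true) (false,false))).
    pose proof (Hnn sH (@pair bundle bundle (false,true) (true,false))).
    pose proof (Hnn sH (@pair bundle bundle (false,true) (false,true))).
    pose proof (Hfeas sH (@pair bundle bundle (false,true) (false,true)) eq_refl).
    pose proof (Hnn sH (@pair bundle bundle (false,true) (true,true))).
    pose proof (Hfeas sH (@pair bundle bundle (false,true) (true,true)) eq_refl).
    pose proof (Hnn sH (@pair bundle bundle (true,true) (false,false))).
    pose proof (Hnn sH (@pair bundle bundle (true,true) (true,false))).
    pose proof (Hfeas sH (@pair bundle bundle (true,true) (true,false)) eq_refl).
    pose proof (Hnn sH (@pair bundle bundle (true,true) (false,true))).
    pose proof (Hfeas sH (@pair bundle bundle (true,true) (false,true)) eq_refl).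
    pose proof (Hnn sH (@pair bundle bundle (true,true) (true,true))).
    pose proof (Hfeas sH (@pair bundle bundle (true,true) (true,true)) eq_refl).
    simpl in *. rewrite hL in IC1. rewrite hH in IC2. kill_rmax.
    clear HIC Hsum Hnn Hfeas.
    destruct (Rle_dec (exp_welfare vex x sL) (((2 + sqrt 2) / 4 + eps) * opt_welfare vex sL)) as [Hc|Hc].
    + exists sL. split; [|exact Hc].
      unfold opt_welfare, welfare, bval, bundle_of, vex, all_allocs, all_bundles; simpl.
      rewrite hL. kill_rmax. lra.
    + exists sH. apply Rnot_le_lt in Hc.
      unfold exp_welfare, opt_welfare, welfare, bval, bundle_of, vex, all_allocs, all_bundles, lsum in *; simpl in *.
      rewrite hL in Hc. rewrite hH. kill_rmax.
      split; [lra|]. clear E hH hL.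
      lra.
Qed.
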